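(* Let $T$ be a finite set of triples and $Q$ a finite nonempty set of queries. For each $q \in Q$ let $T_q \subseteq T$ be nonempty and $f_q(t) = \mathbb{I}[t\in T_q]$. Define $c_t = \sum_{q\in Q} f_q(t)$, $\mathrm{cost}(G,Q) = \sum_{t\in T} c_t$, the sensitivity $s(t) = \sum_{q\in Q}\frac{1}{|T_q|}\mathbb{I}[t\in T_q]$, $S = \sum_{t\in T} s(t)$, and the sampling probability $p(t) = s(t)/S$. Let $m\ge 1$, draw $m$ triples independently from $T$ according to $p$, let $X_t$ be the number of times $t$ is drawn, and let $w(t) = \frac{1}{m\,p(t)}$ for triples with $p(t)>0$. Define $\mathrm{cost}(C,Q) = \sum_{t \in T:\, X_t>0} X_t\, w(t)\, c_t$. Then \begin{enumerate} \item $\mathbb{E}[\mathrm{cost}(C,Q)] = \mathrm{cost}(G,Q)$; \item $\operatorname{Var}[\mathrm{cost}(C,Q)] \leq \frac{|Q|}{m}\,\mathrm{cost}(G,Q)^2$. \end{enumerate}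
   Context: $T$ is the triple set of a knowledge graph $G$, $Q$ a user-specific query workload, and $T_q$ the set of triples relevant to query $q$. Triples with $s(t)=0$ (equivalently $c_t = 0$) are never sampled. Thus $X_t \sim \mathrm{Binomial}(m,p(t))$. *)

(* Defs.v *)
From HB Require Import structures.
From mathcomp Require Import all_boot all_order all_algebra.
Set Implicit Arguments. Unset Strict Implicit. Unset Printing Implicit Defensive.
Import Order.TTheory GRing.Theory Num.Theory.
Local Open Scope ring_scope.

Section Coreset.
Variables (R : realFieldType) (T Q : finType) (Tq : Q -> {set T}) (m : nat).

Definition fq (q : Q) (t : T) : R := (t \in Tq q)%:R.
Definition cnt (t : T) : R := \sum_(q : Q) fq q t.
Definition costG : R := \sum_(t : T) cnt t.
Definition sens (t : T) : R := \sum_(q : Q) (#|Tq q|%:R)^-1 * fq q t.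
Definition Stot : R := \sum_(t : T) sens t.
Definition prob (t : T) : R := sens t / Stot.
Definition wgt (t : T) : R := (m%:R * prob t)^-1.

(* Sample space: m independent draws, an outcome is x : 'I_m -> T,
   with probability prod_i p(x_i). *)
Definition outcome := {ffun 'I_m -> T}.
Definition Pr (x : outcome) : R := \prod_(i < m) prob (x i).
Definition Xc (x : outcome) (t : T) : nat := #|[set i : 'I_m | x i == t]|.
Definition costC (x : outcome) : R :=
  \sum_(t : T | (0 < Xc x t)%N) (Xc x t)%:R * wgt t * cnt t.

Definition Expect (f : outcome -> R) : R := \sum_(x : outcome) Pr x * f x.
Definition Variance (f : outcome -> R) : R :=
  Expect (fun x => (f x - Expect f) ^+ 2).
End Coreset.

(* Main.v *)
Require Import Defs.
From HB Require Import structures.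
From mathcomp Require Import all_boot all_order all_algebra.
From mathcomp Require Import ring lra.
Import Order.TTheory GRing.Theory Num.Theory.
Local Open Scope ring_scope.

Lemma sum_ffun_prod (R : comRingType) (T : finType) (m : nat)
  (F : 'I_m -> T -> R) :
  \sum_(x : {ffun 'I_m -> T}) \prod_i F i (x i) = \prod_i \sum_t F i t.
Proof. by rewrite bigA_distr_bigA. Qed.

Lemma prod_pick (R : comRingType) (m : nat) (i : 'I_m) (a : 'I_m -> R) :
  \prod_j (if j == i then a j else 1) = a i.
Proof. by rewrite -big_mkcond big_pred1_eq. Qed.
Arguments prod_pick {R m}.

Lemma basics (R : realFieldType) (T Q : finType) (Tq : Q -> {set T}) :
  (0 < #|Q|)%N -> (forall q : Q, Tq q != set0) ->
  [/\ @Stot R T Q Tq = #|Q|%:R,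
      0 < @costG R T Q Tq,
      forall t, 0 <= @cnt R T Q Tq t,
      forall t, 0 <= @sens R T Q Tq t &
      forall t, @cnt R T Q Tq t <= @costG R T Q Tq * @sens R T Q Tq t].
Proof.
move=> Qpos Tne.
have cardE q : #|Tq q|%:R = \sum_t @fq R T Q Tq q t.
  rewrite /fq -sum1_card natr_sum [RHS](bigID (fun t => t \in Tq q)) /=.
  rewrite [X in _ + X]big1 ?addr0; last by move=> t /negbTE ->.
  by apply: eq_bigr => t ->.
have Tpos q : (0 < #|Tq q|)%N by rewrite card_gt0.
have fq_ge0 q t : 0 <= @fq R T Q Tq q t by rewrite /fq ler0n.
have c_ge0 t : 0 <= @cnt R T Q Tq t by apply: sumr_ge0.
have fc q t : @fq R T Q Tq q t <= @cnt R T Q Tq t.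
  by rewrite /cnt (bigD1 q) //= lerDl sumr_ge0.
have TG q : #|Tq q|%:R <= @costG R T Q Tq.
  by rewrite cardE; apply: ler_sum => t _; apply: fc.
have Gpos : 0 < @costG R T Q Tq.
  case/card_gt0P: Qpos => q _.
  apply: lt_le_trans (TG q); by rewrite ltr0n.
split => //.
- rewrite /Stot /sens exchange_big /=.
  rewrite -sum1_card natr_sum; apply: eq_bigr => q _.
  by rewrite -mulr_sumr -cardE mulVf // pnatr_eq0 -lt0n.
- move=> t; apply: sumr_ge0 => q _; apply: mulr_ge0 => //.
  by rewrite invr_ge0 ler0n.
- move=> t; rewrite /sens mulr_sumr /cnt; apply: ler_sum => q _.
  rewrite mulrA -[X in X <= _]mul1r; apply: ler_wpM2r => //.
  by rewrite ler_pdivlMr ?ltr0n // mul1r.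
Qed.

Lemma E_prod (R : realFieldType) (T Q : finType) (Tq : Q -> {set T}) (m : nat)
  (a : 'I_m -> T -> R) :
  \sum_(x : outcome T m) @Pr R T Q Tq m x * \prod_j a j (x j) =
  \prod_j \sum_t @prob R T Q Tq t * a j t.
Proof.
rewrite -sum_ffun_prod; apply: eq_bigr => x _; by rewrite /Pr -big_split.
Qed.

Lemma E_one (R : realFieldType) (T Q : finType) (Tq : Q -> {set T}) (m : nat)
  (i : 'I_m) (g : T -> R) :
  \sum_t @prob R T Q Tq t = 1 ->
  \sum_(x : outcome T m) @Pr R T Q Tq m x * g (x i) =
  \sum_t @prob R T Q Tq t * g t.
Proof.
move=> p1.
transitivity (\sum_(x : outcome T m) @Pr R T Q Tq m x *
   \prod_j (fun j t => if j == i then g t else 1) j (x j)).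
  by apply: eq_bigr => x _; rewrite (prod_pick i (fun j => g (x j))).
rewrite (@E_prod R T Q Tq m (fun j t => if j == i then g t else 1)).
rewrite (eq_bigr (fun j => if j == i then \sum_t @prob R T Q Tq t * g t else 1)).
  by rewrite (prod_pick i (fun _ => \sum_t @prob R T Q Tq t * g t)).
move=> j _ /=; case: (j == i) => //.
by rewrite -[RHS]p1; apply: eq_bigr => t _; rewrite mulr1.
Qed.

Lemma E_two (R : realFieldType) (T Q : finType) (Tq : Q -> {set T}) (m : nat)
  (i k : 'I_m) (g h : T -> R) :
  \sum_t @prob R T Q Tq t = 1 -> i != k ->
  \sum_(x : outcome T m) @Pr R T Q Tq m x * (g (x i) * h (x k)) =
  (\sum_t @prob R T Q Tq t * g t) * (\sum_t @prob R T Q Tq t * h t).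
Proof.
move=> p1 ik.
transitivity (\sum_(x : outcome T m) @Pr R T Q Tq m x *
   \prod_j (fun j t => (if j == i then g t else 1) * (if j == k then h t else 1)) j (x j)).
  apply: eq_bigr => x _; rewrite /= big_split /=.
  by rewrite (prod_pick i (fun j => g (x j))) (prod_pick k (fun j => h (x j))).
rewrite (@E_prod R T Q Tq m (fun j t => (if j == i then g t else 1) * (if j == k then h t else 1))).
rewrite (eq_bigr (fun j => (if j == i then \sum_t @prob R T Q Tq t * g t else 1)
   * (if j == k then \sum_t @prob R T Q Tq t * h t else 1))).
  rewrite big_split /=.
  by rewrite (prod_pick i (fun _ => \sum_t @prob R T Q Tq t * g t))
             (prod_pick k (fun _ => \sum_t @prob R T Q Tq t * h t)).
move=> j _ /=; case: (j =P i) => [->|_].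
  rewrite (negbTE ik) mulr1; apply: eq_bigr => t _; by rewrite mulr1.
case: (j == k); rewrite mul1r.
  by apply: eq_bigr => t _; rewrite mul1r.
by rewrite -[RHS]p1; apply: eq_bigr => t _; rewrite mulr1.
Qed.

Lemma costC_sum (R : realFieldType) (T Q : finType) (Tq : Q -> {set T}) (m : nat)
  (x : outcome T m) :
  @costC R T Q Tq m x = \sum_i @wgt R T Q Tq m (x i) * @cnt R T Q Tq (x i).
Proof.
rewrite /costC big_mkcond /=.
rewrite (eq_bigr (fun t => \sum_i (x i == t)%:R * (@wgt R T Q Tq m t * @cnt R T Q Tq t))).
  rewrite exchange_big /=; apply: eq_bigr => i _.
  rewrite (bigD1 (x i)) //= eqxx mul1r big1 ?addr0 //.
  by move=> t /negbTE; rewrite eq_sym => ->; rewrite mul0r.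
move=> t _; rewrite -mulr_suml -mulrA.
have -> : \sum_i (x i == t)%:R = (Xc x t)%:R :> R.
  rewrite /Xc -sum1_card natr_sum [RHS]big_mkcond /=; apply: eq_bigr => i _.
  by rewrite inE; case: (x i == t).
by case: ifP => // /negbT; rewrite -eqn0Ngt => /eqP ->; rewrite mul0r.
Qed.
Arguments E_one {R T Q Tq m}.
Arguments E_two {R T Q Tq m}.

Theorem mainTheorem3 (R : realFieldType) (T Q : finType) (Tq : Q -> {set T})
    (m : nat) :
  (0 < #|Q|)%N ->
  (forall q : Q, Tq q != set0) ->
  (1 <= m)%N ->
  @Expect R T Q Tq m (@costC R T Q Tq m) = @costG R T Q Tq /\
  @Variance R T Q Tq m (@costC R T Q Tq m)
    <= (#|Q|%:R / m%:R) * (@costG R T Q Tq) ^+ 2.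
Proof.
move=> Qpos Tne m1.
have [SE Gpos c0 s0 cs] := @basics R T Q Tq Qpos Tne.
set p := @prob R T Q Tq.
set G := @costG R T Q Tq.
set c := @cnt R T Q Tq.
set s := @sens R T Q Tq.
set g := fun t => @wgt R T Q Tq m t * c t.
have S0 : @Stot R T Q Tq != 0 by rewrite SE pnatr_eq0 -lt0n.
have m0 : m%:R != 0 :> R by rewrite pnatr_eq0 -lt0n.
have p1 : \sum_t p t = 1.
  by rewrite /p /prob -mulr_suml -/(Stot _) mulfV.
have cz t : s t = 0 -> c t = 0.
  move=> st; apply/eqP; rewrite eq_le c0 andbT.
  by have := cs t; rewrite -/c -/G -/s st mulr0.
have pg t : p t * g t = c t / m%:R.
  rewrite /g /wgt -/p; have [st|st] := eqVneq (s t) 0.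
    by rewrite /p /prob -/s st !mul0r (cz t st) mul0r.
  have pt : p t != 0 by rewrite /p /prob mulf_neq0 // invr_eq0.
  by field; rewrite pt m0.
have pg2 t : m%:R * (p t * g t ^+ 2) <= (#|Q|%:R / m%:R) * G * c t.
  rewrite /g /wgt -/p; have [st|st] := eqVneq (s t) 0.
    rewrite /p /prob -/s st !mul0r mulr0 (cz t st) mulr0 //.
  have pt : p t != 0 by rewrite /p /prob mulf_neq0 // invr_eq0.
  have -> : m%:R * (p t * ((m%:R * p t)^-1 * c t) ^+ 2) =
            (#|Q|%:R / m%:R * c t) * (c t / s t).
    rewrite /p /prob -/s SE; field.
    by rewrite m0 st -SE S0.
  rewrite [X in _ <= X](_ : _ = #|Q|%:R / m%:R * c t * G); last by ring.
  apply: ler_wpM2l.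
    by apply: mulr_ge0 => //; apply: mulr_ge0 => //; rewrite invr_ge0 ler0n.
  by rewrite ler_pdivrMr ?lt0r ?st ?s0 // mulrC.
set B := \sum_t p t * g t.
set A := \sum_t p t * g t ^+ 2.
have hB : m%:R * B = G.
  rewrite /B (eq_bigr _ (fun t _ => pg t)) -mulr_suml.
  by rewrite mulrCA mulfV // mulr1.
have LA : m%:R * A <= #|Q|%:R / m%:R * G ^+ 2.
  rewrite /A mulr_sumr expr2 mulrA {2}/G /costG mulr_sumr.
  by apply: ler_sum => t _; apply: pg2.
pose i0 : 'I_m := Ordinal m1.
have fE x : @costC R T Q Tq m x = \sum_i g (x i) by rewrite costC_sum.
have P1 : \sum_(x : outcome T m) @Pr R T Q Tq m x = 1.
  transitivity (\sum_(x : outcome T m) @Pr R T Q Tq m x * (fun _ => 1 : R) (x i0)).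
    by apply: eq_bigr => x _; rewrite mulr1.
  rewrite (E_one i0 (fun _ => 1 : R) p1).
  by rewrite -[RHS]p1; apply: eq_bigr => t _; rewrite mulr1.
have EF : @Expect R T Q Tq m (@costC R T Q Tq m) = G.
  rewrite /Expect (eq_bigr (fun x => \sum_i @Pr R T Q Tq m x * g (x i))); last first.
    by move=> x _; rewrite fE mulr_sumr.
  rewrite exchange_big /=.
  rewrite (eq_bigr (fun _ => B)); last by move=> i _; rewrite (E_one i g p1).
  by rewrite sumr_const card_ord -mulr_natl hB.
have Ei i : \sum_k \sum_(x : outcome T m) @Pr R T Q Tq m x * (g (x i) * g (x k))
     = A - B * B + \sum_(k < m) B * B.
  rewrite (bigD1 i) //= [X in _ = _ + X](bigD1 i) //=.
  have -> : \sum_(x : outcome T m) @Pr R T Q Tq m x * (g (x i) * g (x i)) = A.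
    apply: (etrans _ (E_one i (fun t => g t ^+ 2) p1)).
    by apply: eq_bigr => x _; rewrite expr2.
  rewrite (eq_bigr (fun _ => B * B)); first by rewrite addrA subrK.
  by move=> k ki; rewrite (E_two i k g g p1) // eq_sym.
have EF2 : \sum_(x : outcome T m) @Pr R T Q Tq m x * @costC R T Q Tq m x ^+ 2
     = m%:R * (A - B * B) + m%:R * m%:R * (B * B).
  rewrite (eq_bigr (fun x => \sum_i \sum_k @Pr R T Q Tq m x * (g (x i) * g (x k)))); last first.
    move=> x _; rewrite fE expr2 mulr_suml mulr_sumr; apply: eq_bigr => i _.
    by rewrite !mulr_sumr.
  rewrite exchange_big /=.
  rewrite (eq_bigr (fun i => \sum_k \sum_(x : outcome T m) @Pr R T Q Tq m x * (g (x i) * g (x k)))); last first.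
    by move=> i _; rewrite exchange_big.
  rewrite (eq_bigr _ (fun i _ => Ei i)).
  by rewrite !sumr_const card_ord -mulrA !mulr_natl mulrnDl.
split => //.
rewrite /Variance EF /Expect.
rewrite [X in X <= _](_ : _ = \sum_(x : outcome T m) (@Pr R T Q Tq m x * @costC R T Q Tq m x ^+ 2
   - (@Pr R T Q Tq m x * @costC R T Q Tq m x) * (G *+ 2) + G ^+ 2 * @Pr R T Q Tq m x)); last first.
  apply: eq_bigr => x _.
  move: (@Pr R T Q Tq m x) (@costC R T Q Tq m x) => a b; clearbody G; ring.
rewrite big_split /= sumrB EF2 -(mulr_suml _ _ _ (G *+ 2)) -mulr_sumr.
move: EF; rewrite /Expect => ->.
rewrite P1 -hB.
rewrite -hB in LA.
have BB : 0 <= m%:R * (B * B) :> R by rewrite mulr_ge0 ?ler0n // -expr2 sqr_ge0.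
move: LA BB; clearbody A B; move: (m%:R : R) (#|Q|%:R / m%:R : R) => a b LA BB.
rewrite [X in X <= _](_ : _ = a * A - a * (B * B)); last by ring.
by apply: le_trans LA; rewrite gerBl.
Qed.
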